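(* Let $G=(V,E)$ be a directed graph, $s\neq t$ vertices and $k\ge 5$ an integer, and let $e(u,v)$ be an undetermined edge. Then $e(u,v)$ is an edge of $SPG_k(s,t)$ if and only if there exist an integer $l$ and vertices $v_2,v_3,\dots,v_{l-2}$ forming a simple path $q^*$ in $G$ of length $l-4\le k-4$ having $e(u,v)$ as one of its edges, such that (1) $v_2\in D$ and $v_{l-2}\in A$; and (2) there exist $v_1\in In_D(v_2)$ and $v_{l-1}\in Out_A(v_{l-2})$ such that the vertices $s,v_1,v_2,\dots,v_{l-1},t$ are pairwise distinct.
   Context: A path from $x$ to $y$ in $G$ is a vertex sequence $x=v_0,\dots,v_m=y$ with $(v_{i-1},v_i)\in E$; its length is $m$ and $V(p)$, $E(p)$ are its vertex and edge sets. A simple path has no repeated vertex. $SPG_k(s,t)$ is the subgraph of $G$ formed by the union of vertex sets and edge sets of all simple paths from $s$ to $t$ of length at most $k$. For a vertex $u$ and integer $l\ge 0$, $EV^*_l(s,u)$ exists iff there is at least one simple path from $s$ to $u$ of length at most $l$ not containing $t$, and then $EV^*_l(s,u)$ is the intersection of $V(p)$ over all such paths. Symmetrically, $EV^*_l(v,t)$ exists iff there is at least one simple path from $v$ to $t$ of length at most $l$ not containing $s$, and then it is the intersection of $V(p)$ over all such paths. The upper-bound graph $SPG^u_k(s,t)$ is the subgraph of $G$ whose edges are exactly those $e(u,v)\in E$ for which there exist integers $k_f,k_b\ge 0$ with $EV^*_{k_f}(s,u)$ and $EV^*_{k_b}(v,t)$ existing, $k_f+1+k_b\le k$, and $EV^*_{k_f}(s,u)\cap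 EV^*_{k_b}(v,t)=\emptyset$. An edge $e(u,v)\in E$ is definite if one of: (a) $u=s$ and $EV^*_{k-1}(v,t)$ exists; (b) $v=t$ and $EV^*_{k-1}(s,u)$ exists; (c) $EV^*_1(s,u)$ and $EV^*_{k-2}(v,t)$ exist and $u\notin EV^*_{k-2}(v,t)$; (d) $EV^*_1(v,t)$ and $EV^*_{k-2}(s,u)$ exist and $v\notin EV^*_{k-2}(s,u)$. An undetermined edge is an edge of $SPG^u_k(s,t)$ that is not definite. The departure set $D$ consists of vertices $w$ having an in-neighbour $x$ such that $x,w,s,t$ are pairwise distinct and $e(s,x),e(x,w)$ are edges of $SPG^u_k(s,t)$; for $w\in D$, $In_D(w)$ is the set of all such $x$. The arrival set $A$ consists of vertices $w$ having an out-neighbour $y$ such that $w,y,s,t$ are pairwise distinct and $e(w,y),e(y,t)$ are edges of $SPG^u_k(s,t)$; for $w\in A$, $Out_A(w)$ is the set of all such $y$. *)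

(* Defs.v *)
From mathcomp Require Import all_boot.
Set Implicit Arguments. Unset Strict Implicit. Unset Printing Implicit Defensive.

Section Defs.
Variables (T : finType) (E : rel T).

(* A path x = v_0, ..., v_m = y is represented by x together with the
   sequence p = [:: v_1; ...; v_m]; its length is size p and its vertex set
   is x :: p.  [spath x y p] : p is a simple path from x to y. *)
Definition spath (x y : T) (p : seq T) : bool :=
  [&& path E x p, last x p == y & uniq (x :: p)].

Definition path_has_edge (x : T) (p : seq T) (u v : T) : Prop :=
  exists p1 p2, x :: p = p1 ++ u :: v :: p2.

Definition SPG_edge (k : nat) (s t u v : T) : Prop :=
  exists p, [/\ spath s t p, size p <= k & path_has_edge s p u v].

Definition EVf_ex (l : nat) (s t u : T) : Prop :=
  exists p, [/\ spath s u p, size p <= l & t \notin s :: p].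
(* w \in EV*_l(s,u) (meaningful when EV*_l(s,u) exists) *)
Definition in_EVf (l : nat) (s t u w : T) : Prop :=
  forall p, spath s u p -> size p <= l -> t \notin s :: p -> w \in s :: p.

Definition EVb_ex (l : nat) (s t v : T) : Prop :=
  exists p, [/\ spath v t p, size p <= l & s \notin v :: p].
Definition in_EVb (l : nat) (s t v w : T) : Prop :=
  forall p, spath v t p -> size p <= l -> s \notin v :: p -> w \in v :: p.

Definition SPGu_edge (k : nat) (s t u v : T) : Prop :=
  E u v /\
  exists kf kb, [/\ EVf_ex kf s t u, EVb_ex kb s t v, kf + 1 + kb <= k &
    forall w, ~ (in_EVf kf s t u w /\ in_EVb kb s t v w)].

Definition definite_edge (k : nat) (s t u v : T) : Prop :=
  E u v /\
  [\/ u = s /\ EVb_ex k.-1 s t v,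
      v = t /\ EVf_ex k.-1 s t u,
      [/\ EVf_ex 1 s t u, EVb_ex (k - 2) s t v & ~ in_EVb (k - 2) s t v u]
    | [/\ EVb_ex 1 s t v, EVf_ex (k - 2) s t u & ~ in_EVf (k - 2) s t u v]].

Definition undetermined_edge (k : nat) (s t u v : T) : Prop :=
  SPGu_edge k s t u v /\ ~ definite_edge k s t u v.

Definition In_D (k : nat) (s t w x : T) : Prop :=
  [/\ uniq [:: x; w; s; t], SPGu_edge k s t s x & SPGu_edge k s t x w].
Definition in_D (k : nat) (s t w : T) : Prop := exists x, In_D k s t w x.

Definition Out_A (k : nat) (s t w y : T) : Prop :=
  [/\ uniq [:: w; y; s; t], SPGu_edge k s t w y & SPGu_edge k s t y t].
Definition in_A (k : nat) (s t w : T) : Prop := exists y, Out_A k s t w y.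

End Defs.

(* Main.v *)
Require Import Defs.
From mathcomp Require Import all_boot.
From mathcomp Require Import zify.

Set Implicit Arguments. Unset Strict Implicit.
Section Aux.
Variables (T : finType) (E : rel T).

Lemma spg_edge_gen (k : nat) s t x y pre suf :
  path E s pre -> last s pre = x -> E x y -> path E y suf -> last y suf = t ->
  uniq (s :: pre ++ y :: suf) -> size pre + 1 + size suf <= k ->
  SPGu_edge E k s t x y.
Proof.
move=> Pp Lp Exy Ps Ls U Hk; split => //.
have U1 : uniq (s :: pre) by move: U; rewrite -cat_cons cat_uniq => /and3P[].
have U2 : uniq (y :: suf) by move: U; rewrite -cat_cons cat_uniq => /and3P[].
have D : forall w, w \in s :: pre -> w \in y :: suf -> False.
  move: U; rewrite -cat_cons cat_uniq => /and3P[_ /hasPn H _] w H1 H2.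
  by move/negP: (H w H2); apply.
have tin : t \in y :: suf by rewrite -Ls mem_last.
have sin : s \in s :: pre by rewrite mem_head.
exists (size pre), (size suf); split => //.
- exists pre; split => //; first by rewrite /spath Pp Lp eqxx U1.
  by apply/negP => /D; apply.
- exists suf; split => //; first by rewrite /spath Ps Ls eqxx U2.
  by apply/negP => /(D _ sin).
- move=> w [H1 H2]; apply: (D w).
  + apply: H1 => //; first by rewrite /spath Pp Lp eqxx U1.
    by apply/negP => /D; apply.
  + apply: H2 => //; first by rewrite /spath Ps Ls eqxx U2.
    by apply/negP => /(D _ sin).
Qed.

Lemma spg_edge_split k s t p a x y b :
  spath E s t p -> size p <= k -> s :: p = a ++ x :: y :: b ->
  SPGu_edge E k s t x y.
Proof.
case/and3P => Pp /eqP Lp Up Hk.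
case: a => [|s' a'] /= [].
- move=> Hs Hp; subst x p.
  move: Pp => /= /andP [Exy Pb].
  apply: (@spg_edge_gen k s t s y [::] b) => //=.
- move=> Hs Hp; subst s' p.
  move: Pp; rewrite cat_path /= => /and3P [Pa Ex /andP [Exy Pb]].
  apply: (@spg_edge_gen k s t x y (rcons a' x) b) => //.
  + by rewrite rcons_path Pa.
  + by rewrite last_rcons.
  + by move: Lp; rewrite last_cat.
  + by rewrite cat_rcons.
  + by move: Hk; rewrite size_rcons size_cat /=; lia.
Qed.




Lemma disj_uniq (s : T) p1 p2 w : uniq (s :: p1 ++ p2) -> w \in s :: p1 -> w \in p2 -> False.
Proof.
rewrite -cat_cons cat_uniq => /and3P[_ /hasPn H _] H1 H2.
by move/negP: (H w H2); apply.
Qed.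

Lemma pre_spath s t p1 p2 : spath E s t (p1 ++ p2) ->
  spath E s (last s p1) p1 /\ (p2 != [::] -> t \notin s :: p1).
Proof.
case/and3P => P /eqP L U; split.
  rewrite /spath eqxx; move: P; rewrite cat_path => /andP[-> _].
  by move: U; rewrite -cat_cons cat_uniq => /and3P[->].
case: p2 L U {P} => [//|y r] L U _.
apply/negP => Ht; apply: (disj_uniq U Ht).
by rewrite -L last_cat /= mem_last.
Qed.

Lemma suf_spath s t p1 p2 : spath E s t (p1 ++ p2) ->
  spath E (last s p1) t p2 /\ (p1 != [::] -> s \notin last s p1 :: p2).
Proof.
case/and3P => P /eqP L U.
have Hl : last s p1 \in s :: p1 by apply: mem_last.
split.
  rewrite /spath; move: P; rewrite cat_path => /andP[_ ->].
  rewrite -last_cat L eqxx /=.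
  apply/andP; split; last by move: U; rewrite -cat_cons cat_uniq => /and3P[_ _ ->].
  by apply/negP => /(disj_uniq U Hl).
case: p1 U Hl {P L} => [//|x r] U Hl _.
rewrite inE negb_or; apply/andP; split.
  move: U => /= /andP[Hs _]; apply/negP => /eqP Hs'.
  by move: Hs; rewrite -cat_cons mem_cat Hs' mem_last.
by apply/negP => /(disj_uniq U (mem_head _ _)).
Qed.


Lemma fwd k s t u v p a b : E u v -> spath E s t p -> size p <= k ->
  s :: p = a ++ u :: v :: b -> ~ definite_edge E k s t u v ->
  exists a1 v2 q y, p = a1 :: v2 :: q ++ [:: y; t] /\ path_has_edge v2 q u v.
Proof.
move=> Euv Hp Hsz Hab Hnd.
have Up : uniq (s :: p) by case/and3P: Hp.
case: a Hab => [|a0 [|a1 a']] /= [] Hs Hpe; subst p.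
- exfalso; apply: Hnd; split => //; constructor 1; split => //.
  have [H1 H2] := suf_spath (p1:=[:: v]) (p2:=b) Hp.
  exists b; split => //; first by move: Hsz => /=; lia.
  by apply: H2.
- exfalso; apply: Hnd; split => //; constructor 3; split.
  + have [H1 H2] := pre_spath (p1:=[:: u]) (p2:=(v :: b)) Hp.
    by exists [:: u]; split => //; apply: H2.
  + have [H1 H2] := suf_spath (p1:=[:: u; v]) (p2:=b) Hp.
    exists b; split => //; first by move: Hsz => /=; lia.
    by apply: H2.
  + have [H1 H2] := suf_spath (p1:=[:: u; v]) (p2:=b) Hp.
    move=> H; have := H b H1.
    have Hs0 : size b <= k - 2 by move: Hsz => /=; lia.
    move=> /(_ Hs0 (H2 isT)).
    by move: Up => /= /and3P[_ /negP].
- case/lastP: b Hp Hsz Up => [|b1 z] Hp Hsz Up.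
  + have Hvt : v = t.
      by case/and3P: Hp => _ /eqP; rewrite /= last_cat.
    have Hp' : spath E s t ((a1 :: rcons a' u) ++ [:: v]) by rewrite /= cat_rcons.
    have [H1 H2] := pre_spath Hp'.
    exfalso; apply: Hnd; split => //; constructor 2; split => //.
    exists (a1 :: rcons a' u); split.
    * by move: H1; rewrite /= last_rcons.
    * by move: Hsz; rewrite /= size_cat size_rcons /=; lia.
    * by apply: H2.
  + have Hzt : z = t.
      by case/and3P: Hp => _ /eqP; rewrite /= last_cat /= last_rcons.
    subst z.
    case/lastP: b1 Hp Hsz Up => [|b2 y] Hp Hsz Up.
    * have Hp1 : spath E s t ((a1 :: a' ++ [:: u; v]) ++ [:: t]) by rewrite /= -catA.
      have [H1 H2] := suf_spath Hp1.
      have Hp2 : spath E s t ((a1 :: rcons a' u) ++ [:: v; t]) by rewrite /= cat_rcons.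
      have [H3 H4] := pre_spath Hp2.
      have Up2 : uniq (s :: (a1 :: rcons a' u) ++ [:: v; t]) by case/and3P: Hp2.
      exfalso; apply: Hnd; split => //; constructor 4; split.
      - exists [:: t]; split => //.
          by move: H1; rewrite /= last_cat.
        by move: (H2 isT); rewrite /= last_cat.
      - exists (a1 :: rcons a' u); split.
        + by move: H3; rewrite /= last_rcons.
        + by move: Hsz; rewrite /= size_cat size_rcons /=; lia.
        + by apply: H4.
      - move=> H.
        have H3' : spath E s u (a1 :: rcons a' u) by move: H3; rewrite /= last_rcons.
        have Hs3 : size (a1 :: rcons a' u) <= k - 2.
          by move: Hsz; rewrite /= size_cat size_rcons /=; lia.
        move: (H _ H3' Hs3 (H4 isT)) => /(disj_uniq Up2).
        by apply; rewrite mem_head.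
    * exists a1, (head u a'), (behead (a' ++ u :: v :: b2)), y; split.
        by case: a' {Hp Hsz Up} => [|x r] /=; rewrite -!cats1 -!catA.
      by exists a', b2; case: a' {Hp Hsz Up}.
Qed.

End Aux.

Theorem theorem5p6 (T : finType) (E : rel T) (s t : T) (k : nat) (u v : T) :
  s != t -> 5 <= k -> undetermined_edge E k s t u v ->
  (SPG_edge E k s t u v <->
   exists (v2 : T) (q : seq T),
     [/\ path E v2 q, uniq (v2 :: q), size q <= k - 4,
         path_has_edge v2 q u v &
       [/\ in_D E k s t v2, in_A E k s t (last v2 q) &
         exists v1 vl1, [/\ In_D E k s t v2 v1, Out_A E k s t (last v2 q) vl1 &
           uniq (s :: v1 :: v2 :: q ++ [:: vl1; t])]]]).
Proof.
move=> Hst Hk [Hu Hnd]; split.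
- case=> p [Hp Hsz [a [b Hab]]].
  have [a1 [v2 [q [y [Hpe Hedge]]]]] := fwd Hu.1 Hp Hsz Hab Hnd.
  have Up : uniq (s :: p) by case/and3P: Hp.
  have Pp : path E s p by case/and3P: Hp.
  rewrite Hpe in Up Pp.
  have Hl : last v2 q \in v2 :: q by apply: mem_last.
  have E1 : v2 :: q = rcons (belast v2 q) (last v2 q) := lastI v2 q.
  have S1 : SPGu_edge E k s t s a1.
    by apply: (spg_edge_split (a:=[::]) (b:= v2 :: q ++ [:: y; t]) Hp Hsz); rewrite Hpe.
  have S2 : SPGu_edge E k s t a1 v2.
    by apply: (spg_edge_split (a:=[:: s]) (b:= q ++ [:: y; t]) Hp Hsz); rewrite Hpe.
  have S3 : SPGu_edge E k s t (last v2 q) y.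
    apply: (spg_edge_split (a:=s :: a1 :: belast v2 q) (b:= [:: t]) Hp Hsz).
    by rewrite Hpe -[v2 :: q ++ _]cat_cons E1 cat_rcons.
  have S4 : SPGu_edge E k s t y t.
    by apply: (spg_edge_split (a:=s :: a1 :: v2 :: q) (b:= [::]) Hp Hsz); rewrite Hpe.
  have ID : In_D E k s t v2 a1.
    split => //.
    rewrite (perm_uniq (_ : perm_eq _ [:: s; a1; v2; t])); last first.
      by apply/permP => P /=; lia.
    apply: subseq_uniq Up; rewrite /= !eqxx sub1seq mem_cat !inE eqxx !orbT.
    by [].
  have OA : Out_A E k s t (last v2 q) y.
    split => //.
    rewrite (perm_uniq (_ : perm_eq _ [:: s; last v2 q; y; t])); last first.
      by apply/permP => P /=; lia.
    apply: subseq_uniq Up.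
    rewrite -[v2 :: q ++ _]cat_cons E1 cat_rcons.
    exact: (cat_subseq (subseq_refl [:: s]) (suffix_subseq (a1 :: belast v2 q) _)).
  exists v2, q; split => //.
  + by move: Pp => /= /and3P[_ _]; rewrite cat_path => /andP[].
  + by move: Up => /= /andP[_ /andP[_]]; rewrite cat_uniq mem_cat negb_or => /andP[/andP[-> _] /andP[-> _]].
  + by move: Hsz; rewrite Hpe /= size_cat /=; lia.
  + split; [by exists a1 | by exists y | by exists a1, y].
- case=> v2 [q [Pq Uq Sq [a [b Hab]] [_ _ [v1 [vl1 [HD HA U]]]]]].
  case: HD => _ [E1 _] [E2 _]; case: HA => _ [E3 _] [E4 _].
  exists (v1 :: v2 :: q ++ [:: vl1; t]); split.
  + rewrite /spath U /= E1 E2 cat_path Pq /= E3 E4 last_cat /= !andbT.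
    by [].
  + by rewrite /= size_cat /=; lia.
  + exists [:: s, v1 & a], (b ++ [:: vl1; t]).
    by rewrite /= -cat_cons Hab /= -catA.
Qed.
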